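(* Let $k \subseteq K$ be fields and $d \geqslant 1$. If $K$ is closed at level $d$ (over $k$), then $K$ is perfect and solvably closed, i.e. $K$ has no nontrivial finite solvable (in particular, no nontrivial finite Galois extension with solvable Galois group) and no nontrivial purely inseparable extensions.
   Context: For fields $k \subseteq K$ and a finite-dimensional $K$-algebra $A$, $A$ descends to an intermediate field $k \subseteq K_0 \subseteq K$ if there is a $K_0$-algebra $A_0$ with $A \simeq A_0 \otimes_{K_0} K$; $\operatorname{ed}_k(A/K)$ is the minimum of $\operatorname{trdeg}_k(K_0)$ over such $K_0$. For a finite field extension $L/K$, $\operatorname{lev}_k(L/K)$ is the smallest $d \geq 0$ such that there is a tower $K = K_0 \subseteq \dots \subseteq K_m$ of finite field extensions with $\operatorname{ed}_k(K_i/K_{i-1}) \leq d$ for all $i$ and $L$ embedding into $K_m$ over $K$. The level $d$ closure $K^{(d)}$ of $K$ in an algebraic closure $\overline{K}$ is the compositum of all intermediate fields $K \subseteq L \subseteq \overline{K}$ with $[L:K]<\infty$ and $\operatorname{lev}_k(L/K) \leq d$; $K$ is closed at level $d$ if $K = K^{(d)}$. A finite extension $L/K$ is called solvable if $L$ embeds over $K$ into the top of a tower $K=K_0\subseteq\dots\subseteq K_m$ with each $K_i=K_{i-1}(\lambda_i)$, $\lambda_i$ a root of a polynomial $x^{n_i}-a_i$ or $x^{n_i}-x-a_i$ with $a_i\in K_{i-1}$; $K$ is solvably closed if it has no nontrivial solvable extensions. *)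

(* Defs.v *)
From HB Require Import structures.
From mathcomp Require Import all_boot all_order all_algebra.
From mathcomp Require Import mpoly.
Set Implicit Arguments. Unset Strict Implicit. Unset Printing Implicit Defensive.
Import GRing.Theory.
Local Open Scope ring_scope.

Section AmbientField.
Variable M : fieldType.

Definition subset_of (A B : M -> Prop) : Prop := forall x, A x -> B x.

Definition is_subfield (S : M -> Prop) : Prop :=
  [/\ S 0, S 1, (forall x y, S x -> S y -> S (x - y)),
      (forall x y, S x -> S y -> S (x * y)) & (forall x, S x -> S x^-1)].

Definition adjoin (S : M -> Prop) (lam : M) : M -> Prop :=
  fun y => forall U, is_subfield U -> subset_of S U -> U lam -> U y.

Definition basis_over (F E : M -> Prop) (n : nat) (b : 'I_n -> M) : Prop :=
  (forall x, E x <-> exists c : 'I_n -> M, (forall i, F (c i)) /\ x = \sum_i c i * b i)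
  /\ (forall c : 'I_n -> M, (forall i, F (c i)) -> \sum_i c i * b i = 0 ->
        forall i, c i = 0).

Definition finite_ext (F E : M -> Prop) : Prop :=
  subset_of F E /\ exists n (b : 'I_n -> M), basis_over F E b.

(* The F-algebra E descends to the intermediate field K0 (K0 <= F <= E):
   there is a K0-algebra A0 with A0 (x)_{K0} F ~ E as F-algebras.  A0 is
   realised by its (isomorphic) image B in E: B is a K0-subalgebra of E
   (B = K0-span of b, 1 in B, B closed under products) and a K0-basis b of
   B is an F-basis of E, i.e. the natural map B (x)_{K0} F -> E is an
   isomorphism. *)
Definition descends_to (F E K0 : M -> Prop) : Prop :=
  exists (B : M -> Prop) (n : nat) (b : 'I_n -> M),
    [/\ basis_over K0 B b, basis_over F E b, B 1
      & forall x y, B x -> B y -> B (x * y)].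

Variable k : fieldType.
Variable iota : k -> M.

Definition contains_k (S : M -> Prop) : Prop := forall c, S (iota c).

Definition alg_indep (m : nat) (x : 'I_m -> M) : Prop :=
  forall p : {mpoly k[m]}, mmap iota x p = 0 -> p = 0.

Definition gen_field (m : nat) (x : 'I_m -> M) : M -> Prop :=
  fun y => forall S, is_subfield S -> contains_k S -> (forall i, S (x i)) -> S y.

Definition algebraic_over (S : M -> Prop) (y : M) : Prop :=
  exists p : {poly M}, [/\ p != 0, forall i, S p`_i & root p y].

Definition trdeg_le (K0 : M -> Prop) (d : nat) : Prop :=
  exists (m : nat) (x : 'I_m -> M),
    [/\ (m <= d)%N, forall i, K0 (x i), alg_indep x
      & forall y, K0 y -> algebraic_over (gen_field x) y].

Definition ed_le (F E : M -> Prop) (d : nat) : Prop :=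
  exists K0 : M -> Prop,
    [/\ is_subfield K0, contains_k K0, subset_of K0 F, trdeg_le K0 d
      & descends_to F E K0].

End AmbientField.

Definition image_of (K A : fieldType) (j : K -> A) : A -> Prop :=
  fun x => exists c, x = j c.

(* lev_k(L/K) <= d : there is a tower K = K_0 <= K_1 <= ... <= K_m of finite
   field extensions (all realised as subfields of the top field M) with
   ed_k(K_i / K_(i-1)) <= d, and L embeds into K_m over K. *)
Definition lev_le (k K A : fieldType) (iotaK : {rmorphism k -> K})
    (j : {rmorphism K -> A}) (L : A -> Prop) (d : nat) : Prop :=
  exists (M : fieldType) (iM : {rmorphism K -> M}) (T : nat -> M -> Prop)
         (m : nat) (phi : A -> M),
  [/\ (forall x, T 0%N x <-> image_of iM x),
      (forall i, (i < m)%N ->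
         [/\ is_subfield (T i.+1), finite_ext (T i) (T i.+1)
           & ed_le (fun c => iM (iotaK c)) (T i) (T i.+1) d]),
      (forall c, phi (j c) = iM c),
      (forall x y, L x -> L y -> phi (x + y) = phi x + phi y /\
                                 phi (x * y) = phi x * phi y)
    & (forall x, L x -> T m (phi x))].

Definition is_algebraic_closure (K Kbar : fieldType) (j : {rmorphism K -> Kbar})
  : Prop :=
  (forall p : {poly Kbar}, (1 < size p)%N -> exists x, root p x) /\
  (forall x : Kbar, exists p : {poly K}, p != 0 /\ root (map_poly j p) x).

Definition level_closure (k K Kbar : fieldType) (iotaK : {rmorphism k -> K})
    (j : {rmorphism K -> Kbar}) (d : nat) : Kbar -> Prop :=
  fun x => forall S : Kbar -> Prop, is_subfield S ->
    (forall L : Kbar -> Prop, is_subfield L -> finite_ext (image_of j) L ->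
        lev_le iotaK j L d -> subset_of L S) -> S x.

Definition closed_at_level (k K Kbar : fieldType) (iotaK : {rmorphism k -> K})
    (j : {rmorphism K -> Kbar}) (d : nat) : Prop :=
  forall x, level_closure iotaK j d x <-> image_of j x.

Definition finite_field_ext (K L : fieldType) (jL : {rmorphism K -> L}) : Prop :=
  exists n (b : 'I_n -> L), basis_over (image_of jL) (fun _ => True) b.

Definition solvable_ext (K L : fieldType) (jL : {rmorphism K -> L}) : Prop :=
  finite_field_ext jL /\
  exists (M : fieldType) (iM : {rmorphism K -> M}) (T : nat -> M -> Prop)
         (m : nat) (lam a : nat -> M) (n : nat -> nat),
  [/\ (forall x, T 0%N x <-> image_of iM x),
      (forall i, (i < m)%N ->
         [/\ T i (a i),
             (let p := 'X^(n i) - (a i)%:P in p != 0 /\ root p (lam i)) \/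
             (let p := 'X^(n i) - 'X - (a i)%:P in p != 0 /\ root p (lam i))
           & forall x, T i.+1 x <-> adjoin (T i) (lam i) x])
    & exists phi : {rmorphism L -> M},
        (forall c, phi (jL c) = iM c) /\ (forall y, T m (phi y))].

Definition solvably_closed (K : fieldType) : Prop :=
  forall (L : fieldType) (jL : {rmorphism K -> L}),
    solvable_ext jL -> forall y : L, image_of jL y.

Definition perfect (K : fieldType) : Prop :=
  forall p : nat, p \in [pchar K] -> forall x : K, exists y : K, y ^+ p = x.

(* Main.v *)
From HB Require Import structures.
Require Import Defs.
From mathcomp Require Import all_boot all_order all_algebra.
From mathcomp Require Import ring.
From mathcomp Require Import mpoly.
From Stdlib Require Import Classical.
Set Implicit Arguments. Unset Strict Implicit. Unset Printing Implicit Defensive.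
Import GRing.Theory.
Local Open Scope ring_scope.

Lemma prod_coef_closed (E : fieldType) (P : E -> Prop) :
  P 0 -> P 1 -> (forall x y, P x -> P y -> P (x - y)) ->
  (forall x y, P x -> P y -> P (x * y)) ->
  forall s : seq E, (forall x, x \in s -> P x) ->
  forall i, P (\prod_(x <- s) ('X - x%:P))`_i.
Proof.
move=> P0 P1 PB PM; elim=> [|x s IH] Hs i.
  by rewrite big_nil coef1; case: (i == 0)%N.
rewrite big_cons mulrBl coefB coefCM (mulrC 'X) coefMX.
apply: PB; last apply: PM; first (case: (i == 0)%N => //; apply: IH).
- by move=> y ys; apply: Hs; rewrite inE ys orbT.
- by apply: Hs; rewrite inE eqxx.
- by apply: IH => y ys; apply: Hs; rewrite inE ys orbT.
Qed.

Lemma split_ex (E : fieldType) (P : E -> Prop) (p : {poly E}) :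
  p != 0 ->
  (forall q, q %| p -> (1 < size q)%N -> exists x, P x /\ root q x) ->
  exists s : seq E, (forall x, x \in s -> P x) /\
     p = lead_coef p *: \prod_(x <- s) ('X - x%:P).
Proof.
move: {2}(size p) (leqnn (size p)) => n; elim: n p => [|n IH] p Hsz p0 H.
  by move: Hsz; rewrite leqn0 size_poly_eq0 (negPf p0).
have [Hle|Hlt] := leqP (size p) 1.
  exists [::]; split=> //; rewrite big_nil alg_polyC.
  rewrite {1}(size1_polyC Hle) /lead_coef; congr (_%:P).
  by move: Hle p0; rewrite -size_poly_eq0; case: (size p) => [|[|]].
have [x [Px rx]] := H p (dvdpp p) Hlt.
have /factor_theorem [q Dq] := rx.
have q0 : q != 0 by apply: contraNneq p0 => q0; rewrite Dq q0 mul0r.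
have Hszq : (size q <= n)%N.
  move: Hsz; rewrite Dq size_Mmonic ?monicXsubC // size_XsubC addn2 /=.
  by [].
have Hq : q %| p by rewrite Dq dvdp_mulr.
have [s [Hs Dq']] := IH q Hszq q0 (fun r rq => H r (dvdp_trans rq Hq)).
exists (x :: s); split.
  by move=> y; rewrite inE => /predU1P [->|]; [ | apply: Hs].
rewrite {1}Dq {1}Dq' big_cons -scalerAl mulrC Dq lead_coefM lead_coefXsubC mulr1.
by [].
Qed.
Section SumX.
Variables (E : fieldType) (n : nat) (c : 'I_n -> E).
Definition sumX : {poly E} := \sum_(k < n) c k *: 'X^k.
Lemma coef_sumX m : sumX`_m = \sum_(k < n) c k * (m == k)%:R.
Proof. by rewrite /sumX coef_sum; apply: eq_bigr => k _; rewrite coefZ coefXn. Qed.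
Lemma coef_sumX_ord (i : 'I_n) : sumX`_i = c i.
Proof.
rewrite coef_sumX (bigD1 i) //= eqxx mulr1 big1 ?addr0 // => k ki.
by rewrite (_ : (i == k :> nat) = false) ?mulr0 //; apply/negbTE; rewrite eq_sym.
Qed.
Lemma coef_sumX_ge m : (n <= m)%N -> sumX`_m = 0.
Proof.
move=> nm; rewrite coef_sumX big1 // => k _.
by rewrite (_ : (m == k) = false) ?mulr0 //; apply/negbTE; rewrite neq_ltn (leq_trans (ltn_ord k) nm) orbT.
Qed.
Lemma size_sumX : (size sumX <= n)%N.
Proof. by apply/leq_sizeP => m; apply: coef_sumX_ge. Qed.
Lemma horner_sumX x : sumX.[x] = \sum_(k < n) c k * x ^+ k.
Proof. by rewrite /sumX horner_sum; apply: eq_bigr => k _; rewrite hornerZ hornerXn. Qed.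
End SumX.

Section Span.
Set Default Proof Using "All".
Variables (E : fieldType) (S : E -> Prop).
Hypotheses (S0 : S 0) (S1 : S 1) (SB : forall x y, S x -> S y -> S (x - y))
  (SM : forall x y, S x -> S y -> S (x * y)).

Lemma SD x y : S x -> S y -> S (x + y).
Proof. by move=> Sx Sy; have := SB Sx (SB S0 Sy); rewrite sub0r opprK. Qed.

Lemma Ssum (I : Type) (s : seq I) (P : pred I) (G : I -> E) :
  (forall i, P i -> S (G i)) -> S (\sum_(i <- s | P i) G i).
Proof. by move=> H; apply: big_ind => //; apply: SD. Qed.

Definition SpN n (mu y : E) :=
  exists q : {poly E}, [/\ (size q <= n)%N, forall i, S q`_i & y = q.[mu]].

Lemma span_bridge n mu y :
  SpN n mu y <-> exists c : 'I_n -> E, (forall i, S (c i)) /\ y = \sum_i c i * mu ^+ i.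
Proof.
split.
  case=> q [sq Sq ->]; exists (fun i => q`_i); split=> // .
  exact: horner_coef_wide.
case=> c [Sc ->]; exists (sumX c); split; first exact: size_sumX.
  move=> m; rewrite coef_sumX; apply: Ssum => k _; apply: SM => //.
  by case: (m == k).
by rewrite horner_sumX.
Qed.

Variables (mu : E) (F : {poly E}).
Hypotheses (Fmon : F \is monic) (FS : forall i, S F`_i) (Fmu : root F mu).
Definition rF := (size F).-1.
Definition Sp := SpN rF mu.

Lemma rF_gt0 : (0 < rF)%N.
Proof.
rewrite /rF; case: (ltnP 1 (size F)) => [|H]; first by case: (size F) => [|[|]].
move: Fmu; rewrite (size1_polyC H) rootC.
have : lead_coef F = 1 by apply/eqP.
rewrite /lead_coef; move: H; case: (size F) => [|[|]] //= _.
  by rewrite /lead_coef => ->; rewrite oner_eq0.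
by move=> ->; rewrite oner_eq0.
Qed.

Lemma Sp0 : Sp 0.
Proof. by exists 0; split; rewrite ?size_poly0 ?horner0 // => i; rewrite coef0. Qed.

Lemma Sp1 : Sp 1.
Proof.
exists 1; split; rewrite ?size_poly1 ?rF_gt0 ?hornerC //.
by move=> i; rewrite coef1; case: (i == 0)%N.
Qed.

Lemma SpB y z : Sp y -> Sp z -> Sp (y - z).
Proof.
case=> q [sq Sq ->] [p [sp Sp' ->]]; exists (q - p); split.
- by rewrite (leq_trans (size_polyD _ _)) // size_polyN geq_max sq sp.
- by move=> i; rewrite coefB; apply: SB.
- by rewrite hornerD hornerN.
Qed.

Lemma SpD y z : Sp y -> Sp z -> Sp (y + z).
Proof. by move=> Sy Sz; have := SpB Sy (SpB Sp0 Sz); rewrite sub0r opprK. Qed.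

Lemma SpZ c y : S c -> Sp y -> Sp (c * y).
Proof.
move=> Sc [q [sq Sq ->]]; exists (c *: q); split.
- by rewrite (leq_trans (size_scale_leq _ _)).
- by move=> i; rewrite coefZ; apply: SM.
- by rewrite hornerZ.
Qed.

Lemma SpMmu y : Sp y -> Sp (y * mu).
Proof.
case=> q [sq Sq ->]; set c := q`_rF.-1.
have r0 := rF_gt0.
have lcF : F`_rF = 1 by have := Fmon; rewrite monicE /lead_coef => /eqP.
exists (q * 'X - c *: F); split.
- apply/leq_sizeP => m rm; rewrite coefB coefMX coefZ.
  have -> : (m == 0)%N = false by apply/negbTE; rewrite -lt0n (leq_trans r0).
  move: rm; rewrite leq_eqVlt => /orP [/eqP <-|rm].
    by rewrite lcF mulr1 subrr.
  have m0 : (0 < m)%N by rewrite (leq_trans r0) // ltnW.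
  have -> : q`_m.-1 = 0.
    by rewrite nth_default // (leq_trans sq) // -ltnS prednK.
  have -> : F`_m = 0.
    by rewrite nth_default // (leq_trans _ rm) // /rF; case: (size F).
  by rewrite mulr0 subrr.
- move=> i; rewrite coefB coefMX coefZ; apply: SB; last by apply: SM; [apply: Sq | apply: FS].
  by case: (i == 0)%N.
- by rewrite hornerD hornerN hornerZ hornerMX (rootP Fmu) mulr0 subr0.
Qed.

Lemma SpMexp y i : Sp y -> Sp (y * mu ^+ i).
Proof.
move=> Sy; elim: i => [|i IH]; first by rewrite expr0 mulr1.
by rewrite exprSr mulrA; apply: SpMmu.
Qed.

Lemma SpM y z : Sp y -> Sp z -> Sp (y * z).
Proof.
move=> Sy [q [sq Sq ->]]; rewrite horner_coef mulr_sumr.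
apply: big_ind; [exact: Sp0 | exact: SpD |] => i _.
by rewrite mulrCA; apply: SpZ => //; apply: SpMexp.
Qed.

Lemma Sp_horner (q : {poly E}) : (forall i, S q`_i) -> Sp q.[mu].
Proof.
move=> Sq; rewrite horner_coef; apply: big_ind; [exact: Sp0 | exact: SpD |] => i _.
by apply: SpZ => //; rewrite -[_ ^+ _]mul1r; apply: SpMexp; apply: Sp1.
Qed.

End Span.
Unset Default Proof Using.
Local Open Scope quotient_scope.
Section FracMorph.
Variables (R : idomainType) (F : fieldType) (f : {rmorphism R -> F}).
Hypothesis finj : injective f.

Definition fracm (x : {fraction R}) : F :=
  f (repr x).1 / f (repr x).2.

Lemma f_neq0 (r : R) : r != 0 -> f r != 0.
Proof. by move=> r0; apply: contra r0 => /eqP; rewrite -(rmorph0 f) => /finj ->. Qed.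

Lemma fracm_pi (z : {ratio R}) : fracm (\pi_{fraction R} z) = f z.1 / f z.2.
Proof.
rewrite /fracm; have := FracField.equivf_r z.
set w := repr _ => E.
have w0 : f w.2 != 0 by apply: f_neq0; apply: denom_ratioP.
have z0 : f z.2 != 0 by apply: f_neq0; apply: denom_ratioP.
apply: (canLR (mulfK w0)); rewrite mulrAC; apply: (canRL (mulfK z0)).
by rewrite -!rmorphM mulrC E mulrC.
Qed.

Lemma fracm_tofrac (r : R) : fracm (tofrac r) = f r.
Proof.
by rewrite /tofrac; unlock; rewrite fracm_pi /= !numden_Ratio ?oner_neq0 // rmorph1 divr1.
Qed.

Lemma fracm_add : zmod_morphism fracm.
Proof.
move=> x y.
rewrite -[x]reprK -[y]reprK; move: (repr x) (repr y) => a b.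
have -> : \pi_{fraction R} a - \pi_{fraction R} b =
   \pi_{fraction R} (FracField.addf a (FracField.oppf b)).
  by rewrite FracField.pi_add FracField.pi_opp.
rewrite !fracm_pi /FracField.addf /FracField.oppf /=.
have a0 := denom_ratioP a; have b0 := denom_ratioP b.
rewrite !numden_Ratio ?mulf_neq0 //= rmorphD !rmorphM rmorphN.
have fa0 := f_neq0 a0; have fb0 := f_neq0 b0.
by field; apply/andP; split; [exact: fb0 | exact: fa0].
Qed.
Lemma fracm_mul : monoid_morphism fracm.
Proof.
split.
  have -> : (1 : {fraction R}) = tofrac 1 by rewrite rmorph1.
  by rewrite fracm_tofrac rmorph1.
move=> x y.
rewrite -[x]reprK -[y]reprK; move: (repr x) (repr y) => a b.
have -> : \pi_{fraction R} a * \pi_{fraction R} b =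
   \pi_{fraction R} (FracField.mulf a b).
  by rewrite FracField.pi_mul.
rewrite !fracm_pi /FracField.mulf /=.
have a0 := denom_ratioP a; have b0 := denom_ratioP b.
rewrite !numden_Ratio ?mulf_neq0 //= !rmorphM.
have fa0 := f_neq0 a0; have fb0 := f_neq0 b0.
by field; apply/andP; split; [exact: fb0 | exact: fa0].
Qed.
HB.instance Definition _ := GRing.isZmodMorphism.Build _ _ fracm fracm_add.
HB.instance Definition _ := GRing.isMonoidMorphism.Build _ _ fracm fracm_mul.

Lemma fracm_ex : exists h : {rmorphism {fraction R} -> F},
  (forall r, h (tofrac r) = f r) /\ (forall x, exists r s, h x = f r / f s).
Proof.
exists fracm; split; first exact: fracm_tofrac.
by move=> x; exists (repr x).1, (repr x).2.
Qed.
End FracMorph.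

Section Image.
Variables (A B : fieldType) (g : {rmorphism A -> B}).
Lemma image_sub : is_subfield (image_of g).
Proof.
split.
- by exists 0; rewrite rmorph0.
- by exists 1; rewrite rmorph1.
- by move=> _ _ [x ->] [y ->]; exists (x - y); rewrite rmorphB.
- by move=> _ _ [x ->] [y ->]; exists (x * y); rewrite rmorphM.
- by move=> _ [x ->]; exists x^-1; rewrite fmorphV.
Qed.

Lemma poly_preim (q : {poly B}) : (forall i, image_of g q`_i) ->
  exists q0 : {poly A}, q = map_poly g q0.
Proof.
move=> H.
have H' : forall i, exists c, q`_i == g c.
  by move=> i; have [c Hc] := H i; exists c; rewrite Hc.
exists (\poly_(i < size q) xchoose (H' i)).
apply/polyP => i; rewrite coef_map coef_poly.
case: ltnP => Hi; first by apply/eqP; exact: (xchooseP (H' i)).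
by rewrite nth_default // -(rmorph0 g).
Qed.
End Image.

Section Core.
Variables (k K Kbar : fieldType) (iotaK : {rmorphism k -> K})
  (j : {rmorphism K -> Kbar}) (d : nat).
Hypothesis Hcl : is_algebraic_closure j.
Hypothesis Hclosed : closed_at_level iotaK j d.

Let Fj := image_of j.
Let iota := fun c => j (iotaK c).

Lemma Fj0 : Fj 0. Proof. by case: (image_sub j). Qed.
Lemma Fj1 : Fj 1. Proof. by case: (image_sub j). Qed.
Lemma FjB x y : Fj x -> Fj y -> Fj (x - y). Proof. by case: (image_sub j) => _ _ H _ _; apply: H. Qed.
Lemma FjM x y : Fj x -> Fj y -> Fj (x * y). Proof. by case: (image_sub j) => _ _ _ H _; apply: H. Qed.

Lemma minpoly_ex (mu : Kbar) (g : {poly K}) : g != 0 -> root (map_poly j g) mu ->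
  exists f : {poly K}, [/\ f \is monic, root (map_poly j f) mu &
     forall q, q != 0 -> root (map_poly j q) mu -> (size f <= size q)%N].
Proof.
move: {2}(size g) (leqnn (size g)) => n; elim: n g => [|n IH] g Hsz g0 rg.
  by move: Hsz; rewrite leqn0 size_poly_eq0 (negPf g0).
case: (classic (exists q, [/\ q != 0, root (map_poly j q) mu & (size q < size g)%N])).
  case=> q [q0 rq sq]; apply: (IH q) => //; by rewrite -ltnS (leq_trans sq).
move=> Hn; exists ((lead_coef g)^-1 *: g); split.
- by rewrite monicE lead_coefZ mulVf ?lead_coef_eq0.
- by rewrite map_polyZ rootZ // fmorph_eq0 invr_eq0 lead_coef_eq0.
- move=> q q0 rq; rewrite size_scale ?invr_eq0 ?lead_coef_eq0 //.
  rewrite leqNgt; apply/negP => sq; apply: Hn; exists q; split=> //.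
Qed.

Section Min.
Variables (mu : Kbar) (f : {poly K}).
Hypotheses (fmon : f \is monic) (fmu : root (map_poly j f) mu)
  (fmin : forall q, q != 0 -> root (map_poly j q) mu -> (size f <= size q)%N).
Let F := map_poly j f.
Lemma Fmon : F \is monic. Proof. by rewrite map_monic. Qed.
Lemma FFj i : Fj F`_i. Proof. by rewrite coef_map; exists f`_i. Qed.
Let r := rF F.
Let L := Sp Fj mu F.

Lemma f0 : f != 0. Proof. by apply: monic_neq0. Qed.

Lemma minpoly_dvd q : root (map_poly j q) mu -> f %| q.
Proof.
move=> rq; apply/modp_eq0P; apply/eqP; apply: contraT => r0.
have := fmin r0; rewrite leqNgt ltn_modp f0 /=; apply.
move: rq; rewrite {1}(divp_eq q f) rmorphD rmorphM /root hornerD hornerM.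
by rewrite (rootP fmu) mulr0 add0r.
Qed.

Lemma L_sub : is_subfield L.
Proof.
have H := (Fj0, Fj1, FjB, FjM, Fmon, FFj, fmu).
split.
- exact: (Sp0 Fj0 Fj1 FjB FjM Fmon FFj fmu).
- exact: (Sp1 Fj0 Fj1 FjB FjM Fmon FFj fmu).
- by move=> x y; apply: (SpB Fj0 Fj1 FjB FjM Fmon FFj fmu).
- by move=> x y; apply: (SpM Fj0 Fj1 FjB FjM Fmon FFj fmu).
move=> y Ly; have [->|y0] := eqVneq y 0.
  by rewrite invr0; exact: (Sp0 Fj0 Fj1 FjB FjM Fmon FFj fmu).
case: Ly => q [sq Sq Dy].
have [q0 Dq] := poly_preim Sq.
have q00 : q0 != 0.
  by apply: contra_neq y0 => q00; rewrite Dy Dq q00 rmorph0 horner0.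
have cop : coprimep f q0.
  apply: contraT => /(Bezout_coprimepPn f0 q00) [[u v]] /= /and3P [_ v0 vf] E.
  have : v != 0 by rewrite -size_poly_gt0.
  move=> vn0; have := fmin vn0; rewrite leqNgt vf; apply.
  have := congr1 (fun p => (map_poly j p).[mu]) E.
  rewrite /= !rmorphM !hornerM (rootP fmu) mulr0 => /esym /eqP.
  rewrite mulf_eq0 => /orP [/eqP //| /eqP H0].
  by case/eqP: y0; rewrite Dy Dq; exact: H0.
have [[u v] /= E] := Bezout_eq1_coprimepP _ _ cop.
have := congr1 (fun p => (map_poly j p).[mu]) E.
have Hq0 : (map_poly j q0).[mu] = y by rewrite Dy Dq.
rewrite /= rmorphD !rmorphM hornerD !hornerM (rootP fmu) mulr0 add0r Hq0 rmorph1 hornerC.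
move=> Ev; have -> : y^-1 = (map_poly j v).[mu] by apply: (mulIf y0); rewrite Ev mulVf.
apply: (Sp_horner Fj0 Fj1 FjB FjM Fmon FFj fmu).
by move=> i; rewrite coef_map; exists v`_i.
Qed.

Lemma L_poly (q : {poly K}) : L (map_poly j q).[mu].
Proof.
apply: (Sp_horner Fj0 Fj1 FjB FjM Fmon FFj fmu).
by move=> i; rewrite coef_map; exists q`_i.
Qed.

Lemma L_mu : L mu.
Proof. by have := L_poly 'X; rewrite map_polyX hornerX. Qed.

Lemma L_F x : Fj x -> L x.
Proof. by case=> c ->; have := L_poly c%:P; rewrite map_polyC hornerC. Qed.

Lemma L_free (c : 'I_r -> Kbar) : (forall i, Fj (c i)) ->
  \sum_i c i * mu ^+ i = 0 -> forall i, c i = 0.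
Proof.
move=> Hc H0 i.
have Sq : forall m, Fj (sumX c)`_m.
  move=> m; rewrite coef_sumX; apply: (Ssum Fj0 Fj1 FjB FjM) => l _; apply: FjM => //.
  by case: (m == l :> nat); [exact: Fj1 | exact: Fj0].
have [q0 Dq] := poly_preim Sq.
have : q0 == 0.
  apply: contraT => q00.
  have rq : root (map_poly j q0) mu.
    by rewrite -Dq /root horner_sumX H0.
  have h2 := fmin q00 rq.
  have := size_sumX c; rewrite Dq size_map_poly /r /rF /F size_map_poly => h1.
  have := leq_trans h2 h1; have := f0; rewrite -size_poly_gt0.
  by case: (size f) => // n _; rewrite ltnn.
move=> /eqP q00; rewrite -(coef_sumX_ord c i) Dq q00 rmorph0 coef0 //.
Qed.

Lemma L_basis : basis_over Fj L (fun i : 'I_r => mu ^+ i).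
Proof. by split; [exact: (span_bridge Fj0 Fj1 FjB FjM) | exact: L_free]. Qed.

Lemma L_fin : finite_ext Fj L.
Proof. by split; [exact: L_F | exists r, (fun i => mu ^+ i); exact: L_basis]. Qed.

Section K0.
Variables (K0 : Kbar -> Prop).
Hypotheses (K0sub : is_subfield K0) (K0F : subset_of K0 Fj) (K0f : forall i, K0 F`_i)
  (K0k : contains_k iota K0) (K0tr : trdeg_le iota K0 d).
Lemma K00 : K0 0. Proof. by case: K0sub. Qed.
Lemma K01 : K0 1. Proof. by case: K0sub. Qed.
Lemma K0B x y : K0 x -> K0 y -> K0 (x - y). Proof. by case: K0sub => _ _ H _ _; apply: H. Qed.
Lemma K0M x y : K0 x -> K0 y -> K0 (x * y). Proof. by case: K0sub => _ _ _ H _; apply: H. Qed.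

Lemma L_desc : descends_to Fj L K0.
Proof.
exists (Sp K0 mu F), r, (fun i => mu ^+ i); split.
- split; first exact: (span_bridge K00 K01 K0B K0M).
  by move=> c Hc; apply: L_free => i; apply: K0F; apply: Hc.
- exact: L_basis.
- exact: (Sp1 K00 K01 K0B K0M Fmon K0f fmu).
- by move=> x y; apply: (SpM K00 K01 K0B K0M Fmon K0f fmu).
Qed.

Lemma L_lev : lev_le iotaK j L d.
Proof.
exists Kbar, j, (fun i => if i is 0 then Fj else L), 1%N, (fun x => x); split.
- by [].
- move=> [|i] // _; split; [exact: L_sub | exact: L_fin |].
  by exists K0; split => //; exact: L_desc.
- by [].
- by [].
- by [].
Qed.

Lemma mu_in : Fj mu.
Proof.
apply/Hclosed => S Ssub HS; apply: (HS L L_sub L_fin L_lev); exact: L_mu.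
Qed.
End K0.
End Min.

Section Alg.
Variables (F0 : fieldType) (h : {rmorphism F0 -> Kbar}).
Definition K0h y := Fj y /\ algebraicOver h y.

Lemma K0h_sub : is_subfield K0h.
Proof.
split.
- by split; [exact: Fj0 | exact: algebraic0].
- by split; [exact: Fj1 | exact: algebraic1].
- by move=> x y [? ?] [? ?]; split; [exact: FjB | exact: algebraic_sub].
- by move=> x y [? ?] [? ?]; split; [exact: FjM | exact: algebraic_mul].
- move=> x [? ?]; split; last exact: algebraic_inv.
  by case: (image_sub j) => _ _ _ _ H; apply: H.
Qed.

Lemma K0h_F : subset_of K0h Fj. Proof. by move=> x []. Qed.

Lemma alg_root (p : {poly Kbar}) x : p != 0 -> (forall i, algebraicOver h p`_i) ->
  root p x -> algebraicOver h x.
Proof.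
move=> p0 Hp rx; apply/integral_algebraic; apply: (integral_root p0 rx).
by move=> y /(nthP 0) [i _ <-]; apply/integral_algebraic.
Qed.

Hypothesis HA : forall c, algebraicOver h (iota c).
Hypothesis Htr : trdeg_le iota K0h d.

Lemma roots_in (g : {poly K}) : g != 0 -> (forall i, algebraicOver h (j g`_i)) ->
  forall mu, root (map_poly j g) mu -> Fj mu.
Proof.
move=> g0 Hg mu rg.
have [f [fmon fmu fmin]] := minpoly_ex g0 rg.
have fg : f %| g by apply: (minpoly_dvd fmon fmu fmin).
have Fg : map_poly j f %| map_poly j g by rewrite dvdp_map.
have mg0 : map_poly j g != 0 by rewrite map_poly_eq0.
have Fcoef : forall i, K0h (map_poly j f)`_i.
  move=> i; split; first by rewrite coef_map; exists f`_i.
  have mf0 : map_poly j f != 0 by rewrite map_poly_eq0 monic_neq0.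
  have [s [Hs Ds]] := @split_ex _ (root (map_poly j g)) _ mf0
    (fun q qd sq => let: ex_intro x rx := Hcl.1 q sq in
       ex_intro _ x (conj (root_dvdp Fg (root_dvdp qd rx)) rx)).
  have mFmon : map_poly j f \is monic by rewrite map_monic.
  rewrite Ds (monicP mFmon) scale1r.
  apply: (prod_coef_closed (algebraic0 h) (algebraic1 h)).
  - by move=> ? ?; apply: algebraic_sub.
  - by move=> ? ?; apply: algebraic_mul.
  - move=> x xs; apply: (alg_root mg0) (Hs x xs) => l; rewrite coef_map; exact: Hg.
apply: (mu_in fmon fmu fmin K0h_sub K0h_F Fcoef) => //.
by move=> c; split; [exists (iotaK c) | exact: HA].
Qed.
End Alg.
End Core.

Section SubF.
Variables (M : fieldType) (S : M -> Prop) (Ssub : is_subfield S).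
Lemma sS0 : S 0. Proof. by case: Ssub. Qed.
Lemma sS1 : S 1. Proof. by case: Ssub. Qed.
Lemma sSB x y : S x -> S y -> S (x - y). Proof. by case: Ssub => _ _ H _ _; apply: H. Qed.
Lemma sSM x y : S x -> S y -> S (x * y). Proof. by case: Ssub => _ _ _ H _; apply: H. Qed.
Lemma sSV x : S x -> S x^-1. Proof. by case: Ssub => _ _ _ _ H; apply: H. Qed.
Lemma sSX x n : S x -> S (x ^+ n).
Proof. by move=> Sx; elim: n => [|n IH]; rewrite ?expr0 ?exprS; [exact: sS1 | exact: sSM]. Qed.
Lemma sS_horner (p : {poly M}) x : (forall i, S p`_i) -> S x -> S p.[x].
Proof.
move=> Sp Sx; rewrite horner_coef; apply: (Ssum sS0 sS1 sSB sSM) => i _.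
by apply: sSM; [exact: Sp | exact: sSX].
Qed.
End SubF.

Section Final.
Variables (k K Kbar : fieldType) (iotaK : {rmorphism k -> K})
  (j : {rmorphism K -> Kbar}) (d : nat).
Hypothesis Hd : (1 <= d)%N.
Hypothesis Hcl : is_algebraic_closure j.
Hypothesis Hclosed : closed_at_level iotaK j d.
Let iota := fun c => j (iotaK c).
Let hh : {rmorphism k -> Kbar} := j \o iotaK.

Lemma gen_alg (F0 : fieldType) (h : {rmorphism F0 -> Kbar}) m (x : 'I_m -> Kbar) :
  (forall c, gen_field iota x (h c)) ->
  forall y, algebraicOver h y -> algebraic_over (gen_field iota x) y.
Proof.
move=> H y [p p0 rp]; exists (map_poly h p); split => //.
- by rewrite map_poly_eq0.
- by move=> i; rewrite coef_map; apply: H.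
Qed.

Lemma trdeg_case (a : K) : exists (F0 : fieldType) (h : {rmorphism F0 -> Kbar}),
  [/\ forall c, algebraicOver h (iota c), algebraicOver h (j a)
    & trdeg_le iota (K0h j h) d].
Proof.
case: (classic (algebraicOver hh (j a))) => [HA | nA].
  exists k, hh; split => //.
    by move=> c; exact: (algebraic_id hh c).
  exists 0%N, (fun _ => 0); split => //.
  - by case.
  - move=> p Hp; rewrite (nvar0_mpolyC_eq p) // in Hp *.
    have := Hp; rewrite (mmapC _ hh) /= => /eqP.
    by rewrite !fmorph_eq0 => /eqP ->; rewrite mpolyC0.
  - move=> y [_ Hy]; apply: (gen_alg (h := hh)) => // c S _ Sk _; exact: Sk.
pose RtoM : {rmorphism {poly k} -> Kbar} := horner_eval (j a) \o map_poly hh.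
have RtoME q : RtoM q = (map_poly hh q).[j a] by rewrite /= horner_evalE.
have Rinj : injective RtoM.
  move=> q1 q2 E; apply/eqP; rewrite -subr_eq0; apply/negP => /negP H.
  by apply: nA; exists (q1 - q2) => //; rewrite /root -RtoME rmorphB E subrr.
have [h [Htof Hrep]] := fracm_ex Rinj.
have Hc c : iota c = h (tofrac c%:P) by rewrite Htof RtoME map_polyC hornerC.
have Ha : j a = h (tofrac 'X) by rewrite Htof RtoME map_polyX hornerX.
exists {fraction {poly k}}, h; split.
- by move=> c; rewrite Hc; exact: algebraic_id.
- by rewrite Ha; exact: algebraic_id.
exists 1%N, (fun _ => j a); split => //.
- move=> i; split; first by exists a.
  by rewrite Ha; exact: algebraic_id.
- move=> p Hp.
  pose qq := \sum_(m <- msupp p) p@_m *: 'X^(m ord0) : {poly k}.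
  have Eq : RtoM qq = 0.
    rewrite -Hp /mmap rmorph_sum; apply: eq_bigr => m _.
    rewrite -mul_polyC rmorphM RtoME map_polyC hornerC rmorphXn RtoME map_polyX hornerX.
    by rewrite /mmap1 big_ord1.
  have qq0 : qq = 0 by apply: Rinj; rewrite Eq rmorph0.
  apply/eqP; rewrite -msupp_eq0; apply/eqP.
  case Es: (msupp p) => [|m0 s] //.
  have m0in : m0 \in msupp p by rewrite Es inE eqxx.
  have := congr1 (fun q : {poly k} => q`_(m0 ord0)) qq0.
  rewrite /= coef0 /qq coef_sum (bigD1_seq m0 m0in (msupp_uniq p)) /=.
  rewrite coefZ coefXn eqxx mulr1 big1 ?addr0.
    by move/eqP; rewrite mcoeff_eq0 m0in.
  move=> m mm0; rewrite coefZ coefXn.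
  have -> : (m0 ord0 == m ord0) = false; last by rewrite mulr0.
  apply/negbTE; apply: contra mm0 => /eqP E0; apply/eqP/mnmP => i.
  by rewrite (ord1 i) E0.
  - move=> y [_ Hy]; apply: (gen_alg (h := h)) Hy => c S Ssub Sk Sx.
  have [r [s ->]] := Hrep c.
  have SR q : S (RtoM q).
    rewrite RtoME; apply: (sS_horner Ssub); last exact: (Sx ord0).
    by move=> i; rewrite coef_map; exact: Sk.
  by apply: (sSM Ssub); [exact: SR | apply: (sSV Ssub); exact: SR].
Qed.

Lemma roots_all (a : K) (g : {poly K}) : g != 0 ->
  (forall (F0 : fieldType) (h : {rmorphism F0 -> Kbar}), algebraicOver h (j a) ->
     forall i, algebraicOver h (j g`_i)) ->
  forall mu, root (map_poly j g) mu -> image_of j mu.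
Proof.
move=> g0 Hg mu rmu.
have [F0 [h [HA Ha Htr]]] := trdeg_case a.
exact: (roots_in Hcl Hclosed HA Htr g0 (Hg F0 h Ha)).
Qed.

Lemma g_splits (a : K) (g : {poly K}) : g != 0 ->
  (forall (F0 : fieldType) (h : {rmorphism F0 -> Kbar}), algebraicOver h (j a) ->
     forall i, algebraicOver h (j g`_i)) ->
  exists s : seq K, g = lead_coef g *: \prod_(x <- s) ('X - x%:P).
Proof.
move=> g0 Hg.
suff Hs : forall q, q %| g -> (1 < size q)%N -> exists x, True /\ root q x.
  by have [s [_ Ds]] := split_ex g0 Hs; exists s.
move=> q qd sq.
have [x rx] : exists x, root (map_poly j q) x by apply: Hcl.1; rewrite size_map_poly.
have rgx : root (map_poly j g) x by apply: root_dvdp rx; rewrite dvdp_map.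
have [y Dx] := roots_all g0 Hg rgx.
exists y; split => //.
by move: rx; rewrite Dx /root horner_map fmorph_eq0.
Qed.

Lemma root_image (a : K) (g : {poly K}) : g != 0 ->
  (forall (F0 : fieldType) (h : {rmorphism F0 -> Kbar}), algebraicOver h (j a) ->
     forall i, algebraicOver h (j g`_i)) ->
  forall (M : fieldType) (iM : {rmorphism K -> M}) lam,
    root (map_poly iM g) lam -> image_of iM lam.
Proof.
move=> g0 Hg M iM lam.
have [s Ds] := g_splits g0 Hg.
rewrite Ds map_polyZ rootZ ?fmorph_eq0 ?lead_coef_eq0 //.
rewrite rmorph_prod (eq_bigr (fun x => 'X - (iM x)%:P)) => [|x _]; last exact: map_polyXsubC.
rewrite -(big_map iM xpredT (fun y => 'X - y%:P)) root_prod_XsubC.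
by case/mapP => x _ ->; exists x.
Qed.

Lemma alg_nat (F0 : fieldType) (h : {rmorphism F0 -> Kbar}) (b : bool) :
  algebraicOver h (b%:R).
Proof. by case: b; [exact: algebraic1 | exact: algebraic0]. Qed.

Lemma alg_ifa (F0 : fieldType) (h : {rmorphism F0 -> Kbar}) (a : K) (b : bool) :
  algebraicOver h (j a) -> algebraicOver h (j (if b then a else 0)).
Proof. by case: b => // _; rewrite rmorph0; exact: algebraic0. Qed.

Lemma coef_kum (a : K) n :
  forall (F0 : fieldType) (h : {rmorphism F0 -> Kbar}), algebraicOver h (j a) ->
     forall i, algebraicOver h (j ('X^n - a%:P)`_i).
Proof.
move=> F0 h Ha i; rewrite coefB coefXn coefC rmorphB rmorph_nat.
by apply: algebraic_sub; [exact: alg_nat | exact: alg_ifa].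
Qed.

Lemma coef_as (a : K) n :
  forall (F0 : fieldType) (h : {rmorphism F0 -> Kbar}), algebraicOver h (j a) ->
     forall i, algebraicOver h (j ('X^n - 'X - a%:P)`_i).
Proof.
move=> F0 h Ha i; rewrite !coefB coefXn coefX coefC !rmorphB !rmorph_nat.
by apply: algebraic_sub; [apply: algebraic_sub; exact: alg_nat | exact: alg_ifa].
Qed.

Lemma perfectK : perfect K.
Proof.
move=> p Hp x.
have p0 : (0 < p)%N by apply: prime_gt0; exact: pcharf_prime Hp.
have g0 : 'X^p - x%:P != 0 :> {poly K} by rewrite -size_poly_gt0 size_XnsubC.
have [mu rmu] : exists mu, root (map_poly j ('X^p - x%:P)) mu.
  by apply: Hcl.1; rewrite size_map_poly size_XnsubC.
have [y Dy] := roots_all g0 (@coef_kum x p) rmu.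
exists y; move: rmu; rewrite Dy /root horner_map fmorph_eq0 hornerD hornerN hornerXn hornerC.
by rewrite subr_eq0 => /eqP.
Qed.

Lemma solvably_closedK : solvably_closed K.
Proof.
move=> L jL [_ [M [iM [T [m [lam [a [n [HT0 Hstep [phi [Hphi HTm]]]]]]]]]]] y.
have HT : forall i, (i <= m)%N -> forall x, T i x <-> image_of iM x.
  elim=> [|i IH] Hi; first exact: HT0.
  have [Ta Hroot Hadj] := Hstep i Hi.
  have IH' := IH (ltnW Hi).
  have [a' Da] := (IH' _).1 Ta.
  have Hlam : image_of iM (lam i).
    case: Hroot => /= [[p0 rp] | [p0 rp]].
      have Em : map_poly iM ('X^(n i) - a'%:P) = 'X^(n i) - (a i)%:P.
        apply/polyP => l; rewrite coef_map /= !coefB !coefXn !coefC rmorphB rmorph_nat Da.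
        by case: (l == 0)%N; rewrite ?rmorph0.
      apply: (root_image (a := a') (g := 'X^(n i) - a'%:P)).
      - by rewrite -(map_poly_eq0 iM) Em.
      - exact: coef_kum.
      - by rewrite Em.
    have Em : map_poly iM ('X^(n i) - 'X - a'%:P) = 'X^(n i) - 'X - (a i)%:P.
      apply/polyP => l; rewrite coef_map /= !coefB !coefXn !coefX !coefC !rmorphB !rmorph_nat Da.
      by case: (l == 0)%N; rewrite ?rmorph0.
    apply: (root_image (a := a') (g := 'X^(n i) - 'X - a'%:P)).
    - by rewrite -(map_poly_eq0 iM) Em.
    - exact: coef_as.
    - by rewrite Em.
  move=> x; rewrite Hadj; split.
    by move=> H; apply: H; [exact: image_sub | move=> z /IH' | ].
  by move=> Hx U _ HTU _; apply: HTU; apply/IH'.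
have [c Dc] := (HT m (leqnn m) _).1 (HTm y).
by exists c; apply: (fmorph_inj phi); rewrite Dc Hphi.
Qed.

End Final.

Theorem corollary6p5 (k K Kbar : fieldType) (iotaK : {rmorphism k -> K})
    (j : {rmorphism K -> Kbar}) (d : nat) :
  (1 <= d)%N -> is_algebraic_closure j -> closed_at_level iotaK j d ->
  perfect K /\ solvably_closed K.
Proof.
move=> Hd Hcl Hclosed; split.
- exact: (perfectK Hd Hcl Hclosed).
- exact: (solvably_closedK Hd Hcl Hclosed).
Qed.
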